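(* Let $\kappa$ be a regular uncountable cardinal and let $\mu,\lambda,\chi,\theta\le\kappa$ be cardinals satisfying $\lambda^{<\chi}<\kappa\le 2^\lambda$ and $\lambda^{<\chi}\le\theta^{<\chi}=\theta$. Then for every partition $p:[\kappa]^2\to\mu$, $\mathrm{pr}_1(\kappa,\kappa,\theta,\chi)_p$ holds if and only if $\mathrm{pr}_0(\kappa,\kappa,\theta,\chi)_p$ holds.
   Context: $[\kappa]^2$ denotes the set of pairs $(\alpha,\beta)$ with $\alpha<\beta<\kappa$; a partition is any function $p:[\kappa]^2\to\mu$. For an ordinal $\sigma$, $[\kappa]^\sigma$ is the set of subsets of $\kappa$ of order type $\sigma$, and for $a\in[\kappa]^\sigma$ and $i<\sigma$, $a(i)$ is the $i$-th element of $a$ in increasing order. For sets of ordinals $a,b$, $a<b$ means $\alpha<\beta$ for all $\alpha\in a,\beta\in b$. Given a partition $p:[\kappa]^2\to\mu$, a coloring $c:[\kappa]^2\to\theta$ witnesses (i) $\mathrm{pr}_1(\kappa,\kappa,\theta,\chi)_p$ iff for every ordinal $\sigma<\chi$, every pairwise disjoint family $\mathcal A\subseteq[\kappa]^\sigma$ with $|\mathcal A|=\kappa$, and every function $\tau:\mu\to\theta$, there are $a,b\in\mathcal A$ with $a<b$ such that $c(\alpha,\beta)=\tau(p(\alpha,\beta))$ for all $\alpha\in a,\beta\in b$; (ii) $\mathrm{pr}_0(\kappa,\kappa,\theta,\chi)_p$ iff for every ordinal $\sigma<\chi$, every pairwise disjoint family $\mathcal A\subseteq[\kappa]^\sigma$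 with $|\mathcal A|=\kappa$, and every matrix $(\tau_{i,j})_{i,j<\sigma}$ of functions from $\mu$ to $\theta$, there are $a,b\in\mathcal A$ with $a<b$ such that $c(a(i),b(j))=\tau_{i,j}(p(a(i),b(j)))$ for all $i,j<\sigma$. The principles $\mathrm{pr}_i(\kappa,\kappa,\theta,\chi)_p$ assert that such a coloring exists. *)

(* Defs.v *)
(* Cardinals are represented by types (compared via injections);
   ordinals by strictly well-ordered types. *)
Set Implicit Arguments.

Definition card_le (A B : Type) : Prop := exists f : A -> B, forall x y, f x = f y -> x = y.
Definition card_lt (A B : Type) : Prop := card_le A B /\ ~ card_le B A.

Definition strict_wellorder (A : Type) (R : A -> A -> Prop) : Prop :=
  (forall x y z, R x y -> R y z -> R x z) /\
  (forall x y, R x y \/ x = y \/ R y x) /\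
  well_founded R.

Definition initial_ordinal (K : Type) (ltK : K -> K -> Prop) : Prop :=
  strict_wellorder ltK /\ forall y : K, card_lt {x : K | ltK x y} K.

Definition regular_uncountable (K : Type) (ltK : K -> K -> Prop) : Prop :=
  initial_ordinal ltK /\
  card_lt nat K /\
  (forall P : K -> Prop, card_lt {x : K | P x} K -> exists y, forall x, P x -> ltK x y).

(* Z is (a set of cardinality) L^{<X} = sup { |L|^|N| : |N| < |X| } *)
Definition is_pow_lt (L X Z : Type) : Prop :=
  (forall N : Type, card_lt N X -> card_le (N -> L) Z) /\
  (forall W : Type, (forall N : Type, card_lt N X -> card_le (N -> L) W) -> card_le Z W).

(* A pairwise disjoint family of size kappa of elements of [kappa]^sigma,
   where sigma = (S, RS); members are given by their increasing enumerations
   F x : S -> K, indexed bijectively by K. *)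
Definition disjoint_family (K : Type) (ltK : K -> K -> Prop)
    (S : Type) (RS : S -> S -> Prop) (F : K -> S -> K) : Prop :=
  (forall x i j, RS i j -> ltK (F x i) (F x j)) /\
  (forall x y, x <> y ->
     ~ (forall k, (exists i, F x i = k) <-> (exists j, F y j = k))) /\
  (forall x y, x <> y -> forall i j, F x i <> F y j).

Definition pr1_witness (K : Type) (ltK : K -> K -> Prop) (M T X : Type)
    (p : K -> K -> M) (c : K -> K -> T) : Prop :=
  forall (S : Type) (RS : S -> S -> Prop), strict_wellorder RS -> card_lt S X ->
  forall F : K -> S -> K, disjoint_family ltK RS F ->
  forall tau : M -> T,
  exists x y, (forall i j, ltK (F x i) (F y j)) /\
    (forall i j, c (F x i) (F y j) = tau (p (F x i) (F y j))).

Definition pr0_witness (K : Type) (ltK : K -> K -> Prop) (M T X : Type)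
    (p : K -> K -> M) (c : K -> K -> T) : Prop :=
  forall (S : Type) (RS : S -> S -> Prop), strict_wellorder RS -> card_lt S X ->
  forall F : K -> S -> K, disjoint_family ltK RS F ->
  forall tau : S -> S -> M -> T,
  exists x y, (forall i j, ltK (F x i) (F y j)) /\
    (forall i j, c (F x i) (F y j) = tau i j (p (F x i) (F y j))).

Definition pr1 (K : Type) (ltK : K -> K -> Prop) (M T X : Type) (p : K -> K -> M) : Prop :=
  exists c : K -> K -> T, @pr1_witness K ltK M T X p c.
Definition pr0 (K : Type) (ltK : K -> K -> Prop) (M T X : Type) (p : K -> K -> M) : Prop :=
  exists c : K -> K -> T, @pr0_witness K ltK M T X p c.

(* Main.v *)
Require Import Defs.
From Stdlib Require Import Classical ClassicalEpsilon FunctionalExtensionality ProofIrrelevance List Wellfounded.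
From mathcomp Require Import ssreflect ssrfun ssrbool eqtype ssrnat seq fintype finfun.
Set Implicit Arguments.
Unset Strict Implicit.

Lemma le_refl A : card_le A A.
Proof. exists id; auto. Qed.
Lemma le_trans A B C : card_le A B -> card_le B C -> card_le A C.
Proof. move=> [f Hf] [g Hg]; exists (fun x => g (f x)); auto. Qed.
Lemma le_lt_trans A B C : card_le A B -> card_lt B C -> card_lt A C.
Proof. move=> H [H1 H2]; split; first exact: (le_trans H H1).
move=> H3; apply: H2; exact: (le_trans H3 H). Qed.
Lemma lt_le_trans A B C : card_lt A B -> card_le B C -> card_lt A C.
Proof. move=> [H1 H2] H; split; first exact: (le_trans H1 H).
move=> H3; apply: H2; exact: (le_trans H H3). Qed.
Lemma lt_le A B : card_lt A B -> card_le A B.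
Proof. by case. Qed.

Lemma le_prod A A' B B' : card_le A A' -> card_le B B' -> card_le (A*B) (A'*B').
Proof. move=> [f Hf] [g Hg]; exists (fun p => (f p.1, g p.2)).
move=> [a b] [c d] /= [] /Hf -> /Hg -> //. Qed.

Lemma le_cod A C D : card_le C D -> card_le (A -> C) (A -> D).
Proof. move=> [f Hf]; exists (fun g a => f (g a)) => g1 g2 E.
apply: functional_extensionality => a; apply: Hf.
exact: (f_equal (fun h => h a) E). Qed.

Lemma le_pairfun A C D : card_le ((A -> C) * (A -> D)) (A -> C * D).
Proof. exists (fun p a => (p.1 a, p.2 a)) => [[f g] [f' g'] E].
have H : forall a, (f a, g a) = (f' a, g' a) by move=> a; exact: (f_equal (fun h => h a) E).
f_equal; apply: functional_extensionality => a; by case: (H a). Qed.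

Lemma le_curry A B C : card_le (A -> B -> C) (A * B -> C).
Proof. exists (fun f p => f p.1 p.2) => f g E.
apply: functional_extensionality => a; apply: functional_extensionality => b.
exact: (f_equal (fun h => h (a, b)) E). Qed.

Lemma le_dom A B C (c0 : C) : card_le A B -> card_le (A -> C) (B -> C).
Proof. move=> [f Hf].
pose pre b := epsilon (inhabits c0) (fun c => True).
exists (fun g b => match excluded_middle_informative (exists a, f a = b) with
  | left H => g (proj1_sig (constructive_indefinite_description _ H))
  | right _ => c0 end) => g1 g2 E.
apply: functional_extensionality => a.
have := f_equal (fun h => h (f a)) E => /=.
case: excluded_middle_informative => [H|[]]; last by exists a.
case: constructive_indefinite_description => a' /= /Hf -> //. Qed.

Lemma le_fun_bool A : card_le A (A -> bool).
Proof. exists (fun a a' => if excluded_middle_informative (a = a') then true else false).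
move=> a b E; have := f_equal (fun h => h b) E => /=.
do 2 case: excluded_middle_informative => //. Qed.

Lemma cantor A : ~ card_le (A -> bool) A.
Proof. move=> [g Hg].
pose P := fun s => exists f, g f = s /\ f s = true.
pose D := fun s => if excluded_middle_informative (P s) then false else true.
have HD : forall s, D s = true <-> ~ P s.
  move=> s; rewrite /D; case: excluded_middle_informative => H; split => //; by move=> /(_ H).
case E: (D (g D)).
- have := proj1 (HD _) E; apply; by exists D.
- have : P (g D).
    apply: NNPP => H; have := proj2 (HD _) H; by rewrite E.
  move=> [f [Hf Hf2]]; have Ef := Hg _ _ Hf; subst f; by rewrite E in Hf2.
Qed.

Lemma wo_irrefl A (R : A -> A -> Prop) : well_founded R -> forall x, ~ R x x.
Proof. move=> wf x; elim: (wf x) => y _ IH Hy; exact: (IH y Hy Hy). Qed.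

Lemma wo_min A (R : A -> A -> Prop) (P : A -> Prop) : well_founded R -> (exists x, P x) ->
  exists x, P x /\ forall y, R y x -> ~ P y.
Proof. move=> wf [x Px]; move: Px; elim: (wf x) => y _ IH Py.
case: (classic (exists z, R z y /\ P z)) => [[z [Rz Pz]]|H]; first exact: (IH z Rz Pz).
exists y; split=> // z Rz Pz; apply: H; by exists z. Qed.

Lemma wo_pull A B (R : B -> B -> Prop) (f : A -> B) : strict_wellorder R ->
  (forall x y, f x = f y -> x = y) -> strict_wellorder (fun x y => R (f x) (f y)).
Proof. move=> [Ht [Htot Hwf]] Hf; split; [|split].
- move=> x y z; exact: Ht.
- move=> x y; case: (Htot (f x) (f y)) => [|[/Hf|]]; auto.
- exact: wf_inverse_image. Qed.

Definition seg A (R : A -> A -> Prop) (a : A) := {x : A | R x a}.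

Definition lex A B (RA : A -> A -> Prop) (RB : B -> B -> Prop) (p q : A * B) :=
  RA p.1 q.1 \/ (p.1 = q.1 /\ RB p.2 q.2).

Lemma wo_lex A B RA RB : @strict_wellorder A RA -> @strict_wellorder B RB ->
  strict_wellorder (lex RA RB).
Proof. move=> [Ht [Htot Hwf]] [Ht' [Htot' Hwf']]; split; [|split].
- move=> [a b] [c d] [e g]; rewrite /lex /=; intuition; subst; eauto.
- move=> [a b] [c d]; rewrite /lex /=.
  case: (Htot a c) => [|[E|]]; auto; subst.
  case: (Htot' b d) => [|[E|]]; subst; auto.
- suff H : forall a b, Acc (lex RA RB) (a, b) by move=> [a b]; exact: H.
  move=> a; elim: (Hwf a) => a' _ IHa b; elim: (Hwf' b) => b' _ IHb.
  constructor => [[c d]]; rewrite /lex /= => [[H|[E H]]]; first exact: IHa.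
  subst; exact: IHb.
Qed.

Definition finite (A : Type) := exists n, card_le A 'I_n.

Lemma fin_le A B : card_le A B -> finite B -> finite A.
Proof. move=> H [n Hn]; exists n; exact: (le_trans H Hn). Qed.

Lemma fin_option A : finite A -> finite (option A).
Proof. move=> [n [g Hg]]; exists n.+1.
exists (fun o => match o with None => ord_max | Some a => widen_ord (leqnSn n) (g a) end).
move=> [a|] [b|] //=.
- move=> E; f_equal; apply: Hg; apply: val_inj; exact: (f_equal val E).
- move=> E; have := f_equal val E => /= E'; have := ltn_ord (g a); by rewrite E' ltnn.
- move=> E; have := f_equal val E => /= E'; have := ltn_ord (g b); by rewrite -E' ltnn.
Qed.

Lemma fin_prod A B : finite A -> finite B -> finite (A * B).
Proof. move=> [n [g Hg]] [m [g' Hg']]; exists #|{: 'I_n * 'I_m}|.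
exists (fun p => enum_rank (g p.1, g' p.2)) => [[a b] [c d]] /enum_rank_inj [] /Hg -> /Hg' -> //.
Qed.

Lemma nat_not_fin : ~ finite nat.
Proof. move=> [n [g Hg]].
have Hinj : injective (fun i : 'I_n.+1 => g (val i)).
  by move=> i j /Hg /val_inj.
have := leq_card _ Hinj; by rewrite !card_ord ltnn.
Qed.

Lemma fin_fun_bool A : finite A -> finite (A -> bool).
Proof. move=> [n Hn].
apply: (fin_le (le_dom true Hn)).
exists #|{: {ffun 'I_n -> bool}}|.
exists (fun f => enum_rank (finfun f)) => f g /enum_rank_inj E.
apply: functional_extensionality => i.
have := f_equal (fun h : {ffun 'I_n -> bool} => h i) E; by rewrite !ffunE.
Qed.

Lemma fin_empty A : ~ inhabited A -> finite A.
Proof. move=> H; exists 0; exists (fun a => False_rect _ (H (inhabits a))).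
move=> a; exfalso; exact: H (inhabits a). Qed.

Lemma list_fin A (l : list A) : (forall a, In a l) -> finite A.
Proof. move=> H.
case: (classic (inhabited A)) => [[a0]|Hn]; last exact: fin_empty.
exists (length l).
have Hi : forall a, exists i : 'I_(length l), List.nth (val i) l a0 = a.
  move=> a; case: (In_nth l a a0 (H a)) => i [/ltP Hi E].
  by exists (Ordinal Hi).
exists (fun a => proj1_sig (constructive_indefinite_description _ (Hi a))).
move=> a b; case: constructive_indefinite_description => i /= <-.
case: constructive_indefinite_description => j /= <- -> //.
Qed.

Lemma inf_nat A : ~ finite A -> card_le nat A.
Proof. move=> Hinf.
case: (classic (inhabited A)) => [inh|Hn]; last by case: Hinf; exact: fin_empty.
pose nxt (l : list A) := epsilon inh (fun a => ~ In a l).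
have Hnxt : forall l, ~ In (nxt l) l.
  move=> l; rewrite /nxt; apply: (epsilon_spec inh (fun a => ~ In a l)).
  apply: NNPP => H; apply: Hinf; apply: (@list_fin A l); move=> a; apply: NNPP => H0; apply: H; by exists a.
pose fix E n := match n with 0 => nil | S n => nxt (E n) :: E n end.
exists (fun n => nxt (E n)).
have Hin : forall m n, (m < n)%N -> In (nxt (E m)) (E n).
  move=> m; elim => // n IH; rewrite ltnS leq_eqVlt => /orP [/eqP ->|/IH H] /=; auto.
move=> m n Emn; case: (ltngtP m n) => // H; exfalso.
- have := Hin _ _ H; rewrite Emn; exact: Hnxt.
- have := Hin _ _ H; rewrite -Emn; exact: Hnxt.
Qed.

Lemma inf_option A : ~ finite A -> card_le (option A) A.
Proof. move=> /inf_nat [e He].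
pose idx (a : A) := epsilon (inhabits 0) (fun n => e n = a).
have Hidx : forall n, idx (e n) = n.
  move=> n; apply: He; rewrite /idx; apply: (epsilon_spec (inhabits 0) (fun m => e m = e n)); by exists n.
exists (fun o => match o with None => e 0
  | Some a => if excluded_middle_informative (exists n, e n = a) then e (S (idx a)) else a end).
move=> [a|] [b|] //.
- case: excluded_middle_informative => [[n Hn]|Ha]; case: excluded_middle_informative => [[m Hm]|Hb].
  + subst; rewrite !Hidx => /He [] -> //.
  + move=> E; exfalso; apply Hb; by exists (S (idx a)).
  + move=> E; exfalso; apply Ha; by exists (S (idx b)).
  + move=> E; simpl in E; by subst.
- case: excluded_middle_informative => [[n Hn]|Ha].
  + by move=> /He.
  + move=> E; exfalso; apply Ha; by exists 0.
- case: excluded_middle_informative => [[n Hn]|Ha].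
  + by move=> /He.
  + move=> E; exfalso; apply Ha; by exists 0.
Qed.

Lemma embed W B (RW : W -> W -> Prop) (RB : B -> B -> Prop) :
  strict_wellorder RW -> strict_wellorder RB -> (forall w, ~ card_le B (seg RW w)) ->
  exists f : W -> B, (forall v w, RW v w -> RB (f v) (f w)) /\
    (forall w b, RB b (f w) -> exists v, RW v w /\ f v = b).
Proof.
move=> [HtW [HtotW HwfW]] [HtB [HtotB HwfB]] Hseg.
case: (classic (inhabited B)) => [inhB|HB]; last first.
  have HW : forall w : W, False.
    move=> w; apply: (Hseg w); exists (fun b => False_rect _ (HB (inhabits b))).
    move=> b; exfalso; exact: HB (inhabits b).
  exists (fun w => False_rect _ (HW w)); split => v; exfalso; exact: HW v.
pose F := fun (w : W) (rec : forall v, RW v w -> B) => epsilon inhB (fun b =>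
  (forall v (p : RW v w), rec v p <> b) /\ (forall b', RB b' b -> exists v (p : RW v w), rec v p = b')).
pose f := Fix HwfW (fun _ => B) F.
have Hf : forall w, f w = F w (fun v _ => f v).
  move=> w; rewrite /f Fix_eq //.
  move=> x g h E.
  have -> : g = h by apply: functional_extensionality_dep => y; apply: functional_extensionality_dep => p; exact: E.
  done.
have HP : forall w, (forall v, RW v w -> f v <> f w) /\ (forall b', RB b' (f w) -> exists v, RW v w /\ f v = b').
  move=> w; rewrite [f w]Hf /F.
  have Hex : exists b, (forall v (p : RW v w), f v <> b) /\ (forall b', RB b' b -> exists v (p : RW v w), f v = b').
    have [b [Hb Hmin]] : exists b, (forall v, RW v w -> f v <> b) /\ forall y, RB y b -> ~ (forall v, RW v w -> f v <> y).
      apply: (wo_min (P := fun b => forall v, RW v w -> f v <> b) HwfB).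
      apply: NNPP => Hn; apply: (Hseg w).
      have Hall : forall b, exists v, RW v w /\ f v = b.
        move=> b; apply: NNPP => Hb; apply: Hn; exists b => v Hv Efv; apply: Hb; by exists v.
      exists (fun b => exist _ (proj1_sig (constructive_indefinite_description _ (Hall b)))
                               (proj1 (proj2_sig (constructive_indefinite_description _ (Hall b))))).
      move=> b1 b2 E; have := f_equal (@proj1_sig _ _) E => /=.
      case: constructive_indefinite_description => v1 /= [_ <-].
      case: constructive_indefinite_description => v2 /= [_ <-] -> //.
    exists b; split; first by move=> v p; exact: Hb.
    move=> b' Hb'; have := Hmin _ Hb' => H; apply: NNPP => Hn; apply: H => v Hv E; apply: Hn; by exists v, Hv.
  have := epsilon_spec inhB _ Hex.
  set e := epsilon _ _ => [[H1 H2]]; split; first by move=> v p; exact: H1.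
  move=> b' /H2 [v [p E]]; by exists v.
have Hmono : forall v w, RW v w -> RB (f v) (f w).
  move=> v w Hvw; case: (HtotB (f v) (f w)) => [//|[E|H]].
  - exfalso; exact: (proj1 (HP w) v Hvw E).
  - have [u [Hu E]] := proj2 (HP v) _ H.
    exfalso; exact: (proj1 (HP w) u (HtW _ _ _ Hu Hvw) E).
exists f; split => //.
move=> w b /(proj2 (HP w)) //.
Qed.

Lemma embed_inj W B (RW : W -> W -> Prop) (RB : B -> B -> Prop) (f : W -> B) :
  strict_wellorder RW -> strict_wellorder RB -> (forall v w, RW v w -> RB (f v) (f w)) ->
  forall x y, f x = f y -> x = y.
Proof. move=> [_ [HtotW _]] [_ [_ HwfB]] Hm x y E.
case: (HtotW x y) => [H|[//|H]]; have := Hm _ _ H; rewrite E => H'; exfalso; exact: (wo_irrefl HwfB H').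
Qed.

Definition Qh (A : Type) := ~ finite A -> card_le (A * A) A.

Lemma Q_transfer A B : card_le A B -> card_le B A -> Qh A -> Qh B.
Proof. move=> HAB HBA HQ HinfB.
have HinfA : ~ finite A by move=> HA; apply: HinfB; exact: (fin_le HBA HA).
exact: (le_trans (le_prod HBA HBA) (le_trans (HQ HinfA) HAB)).
Qed.

Section Goedel.
Variables (A : Type) (R : A -> A -> Prop).
Hypothesis HR : strict_wellorder R.
Definition mx (a b : A) := if excluded_middle_informative (R a b) then b else a.
Definition gkey (p : A * A) := (mx p.1 p.2, (p.1, p.2)).
Definition gord (p q : A * A) := lex R (lex R R) (gkey p) (gkey q).

Lemma gord_wo : strict_wellorder gord.
Proof. rewrite /gord.
apply: (@wo_pull _ _ (lex R (lex R R)) gkey).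
- apply: wo_lex; [exact: HR| apply: wo_lex; exact: HR].
- move=> [a b] [c d] E; have := f_equal snd E; rewrite /gkey; by move=> [] -> ->.
Qed.
Definition leA x y := R x y \/ x = y.

Lemma leA_trans x y z : leA x y -> leA y z -> leA x z.
Proof. case: HR => Ht _; rewrite /leA; move=> [H|E] [H'|E'].
- left; exact: (Ht _ _ _ H H').
- left; by rewrite -E'.
- left; by rewrite E.
- right; by rewrite E E'.
Qed.

Lemma mx_ge1 a b : leA a (mx a b).
Proof. rewrite /mx /leA; case: excluded_middle_informative => H /=; [left|right]; done. Qed.
Lemma mx_ge2 a b : leA b (mx a b).
Proof. rewrite /mx /leA; case: excluded_middle_informative => H /=; first by right.
case: HR => _ [Htot _]; case: (Htot a b) => [//|[E|H']]; [by right|by left]. Qed.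

Lemma gord_le p q : gord p q -> leA p.1 (mx q.1 q.2) /\ leA p.2 (mx q.1 q.2).
Proof. move=> H.
have Hm : leA (mx p.1 p.2) (mx q.1 q.2).
  move: H; rewrite /gord /lex /gkey /=; move=> [H|[E _]]; rewrite /leA; [by left|by right].
split; apply: leA_trans Hm; [exact: mx_ge1|exact: mx_ge2].
Qed.
End Goedel.

Lemma hess_step A (R : A -> A -> Prop) : strict_wellorder R -> (forall a, Qh (seg R a)) -> Qh A.
Proof. move=> HR IH Hinf.
case: (classic (exists a, card_le A (seg R a))) => [[a Ha]|Hno].
  have Hsinf : ~ finite (seg R a) by move=> Hf; apply: Hinf; exact: (fin_le Ha Hf).
  apply: (le_trans (le_prod Ha Ha)); apply: (le_trans (IH a Hsinf)).
  exists (@proj1_sig _ _) => x y; exact: (eq_sig_hprop (fun _ => proof_irrelevance _)).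
have Hseg : forall w, ~ card_le A (seg (gord R) w).
  move=> [c d] Hle.
  pose m := mx R c d.
  pose opt (x : A) : option (seg R m) := match excluded_middle_informative (R x m) with
     left h => Some (exist _ x h) | right _ => None end.
  have Hopt : forall x y, leA R x m -> leA R y m -> opt x = opt y -> x = y.
    move=> x y Hx Hy; rewrite /opt.
    case: excluded_middle_informative => hx; case: excluded_middle_informative => hy //.
    - by move=> [].
    - by case: Hx => // ->; case: Hy.
  have Hle2 : card_le (seg (gord R) (c, d)) (option (seg R m) * option (seg R m)).
    exists (fun s => (opt (proj1_sig s).1, opt (proj1_sig s).2)).
    move=> [[a b] Hab] [[a' b'] Hab'] /= [] E1 E2.
    have [Ha Hb] : leA R a m /\ leA R b m := gord_le HR Hab.
    have [Ha' Hb'] : leA R a' m /\ leA R b' m := gord_le HR Hab'.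
    have Ea := Hopt _ _ Ha Ha' E1; have Eb := Hopt _ _ Hb Hb' E2; subst.
    by rewrite (proof_irrelevance _ Hab Hab').
  case: (classic (finite (seg R m))) => Hfm.
    apply: Hinf; apply: (fin_le (le_trans Hle Hle2)); apply: fin_prod; exact: fin_option.
  apply: Hno; exists m.
  apply: (le_trans Hle); apply: (le_trans Hle2).
  have Ho := inf_option Hfm.
  exact: (le_trans (le_prod Ho Ho) (IH m Hfm)).
have [f [Hm _]] := embed (gord_wo HR) HR Hseg.
exists f; exact: (embed_inj (gord_wo HR) HR Hm).
Qed.

Lemma hess A (R : A -> A -> Prop) : strict_wellorder R -> Qh A.
Proof. move=> HR.
have Hs : forall a, Qh (seg R a).
  case: (HR) => Ht [Htot Hwf].
  apply: (well_founded_ind Hwf) => a IH.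
  have HRs : strict_wellorder (fun x y : seg R a => R (proj1_sig x) (proj1_sig y)).
    apply: wo_pull => // x y; exact: (eq_sig_hprop (fun _ => proof_irrelevance _)).
  apply: (hess_step HRs) => u.
  apply: (Q_transfer _ _ (IH (proj1_sig u) (proj2_sig u))).
  - exists (fun y : seg R (proj1_sig u) => exist (fun z : seg R a => R (proj1_sig z) (proj1_sig u))
       (exist _ (proj1_sig y) (Ht _ _ _ (proj2_sig y) (proj2_sig u))) (proj2_sig y)).
    move=> [y Hy] [z Hz] /= E; have := f_equal (fun s => proj1_sig (proj1_sig s)) E => /= E'.
    subst; by rewrite (proof_irrelevance _ Hy Hz).
  - exists (fun z : seg (fun x y : seg R a => R (proj1_sig x) (proj1_sig y)) u =>
       exist (fun y => R y (proj1_sig u)) (proj1_sig (proj1_sig z)) (proj2_sig z)).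
    move=> [[y Hy] Hy'] [[z Hz] Hz'] /= E; have := f_equal (@proj1_sig _ _) E => /= E'.
    subst; rewrite (proof_irrelevance _ Hy Hz); by rewrite (proof_irrelevance _ Hy' Hz').
exact: (hess_step HR Hs).
Qed.

Lemma finpow L (l0 : L) : card_le (L * L) L -> forall n, card_le ('I_n -> L) L.
Proof. move=> HLL; elim=> [|n IH].
  exists (fun _ => l0) => f g _; apply: functional_extensionality => [[i Hi]] //.
apply: (le_trans _ (le_trans (le_prod (le_refl L) IH) HLL)).
exists (fun f => (f ord_max, fun i : 'I_n => f (widen_ord (leqnSn n) i))) => f g [] E1 E2.
apply: functional_extensionality => k.
case: (ltnP k n) => Hk.
  have -> : k = widen_ord (leqnSn n) (Ordinal Hk) by apply: val_inj.
  exact: (f_equal (fun h => h (Ordinal Hk)) E2).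
have -> : k = ord_max by apply: val_inj => /=; apply/eqP; rewrite eqn_leq Hk -ltnS ltn_ord.
exact: E1.
Qed.

Lemma finpow' L (l0 : L) A : card_le (L * L) L -> finite A -> card_le (A -> L) L.
Proof. move=> HLL [n Hn]; exact: (le_trans (le_dom l0 Hn) (finpow l0 HLL n)). Qed.

Lemma pigeon K (ltK : K -> K -> Prop) Y (g : K -> Y) : strict_wellorder ltK ->
  (forall P : K -> Prop, card_lt {x : K | P x} K -> exists y, forall x, P x -> ltK x y) ->
  card_lt Y K -> exists y, card_le K {k | g k = y}.
Proof. move=> [Ht [_ Hwf]] Hreg HY.
apply: NNPP => Hn.
have Hb : forall y, exists u, forall x, g x = y -> ltK x u.
  move=> y; apply: (Hreg (fun x => g x = y)); split.
    exists (@proj1_sig _ _) => a b; exact: (eq_sig_hprop (fun _ => proof_irrelevance _)).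
  move=> H; apply: Hn; by exists y.
pose u y := proj1_sig (constructive_indefinite_description _ (Hb y)).
have Hu : forall x, ltK x (u (g x)).
  move=> x; rewrite /u; case: constructive_indefinite_description => v /= Hv; exact: Hv.
have [v Hv] : exists v, forall x, (exists y, u y = x) -> ltK x v.
  apply: (Hreg (fun x => exists y, u y = x)); apply: (le_lt_trans _ HY).
  exists (fun s : {x | exists y, u y = x} => proj1_sig (constructive_indefinite_description (fun y => u y = proj1_sig s) (proj2_sig s))).
  move=> [a Ha] [b Hb'] /=.
  case: constructive_indefinite_description => y1 /= E1.
  case: constructive_indefinite_description => y2 /= E2 E; subst.
  apply: (eq_sig_hprop (fun _ => proof_irrelevance _)) => //.
have H1 := Hu v; have H2 := Hv (u (g v)) (ex_intro _ _ erefl).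
exact: (wo_irrefl Hwf (Ht _ _ _ H1 H2)).
Qed.

Definition idx (I L : Type) (sg : I -> I -> L * bool) (phi : L -> bool) : option I :=
  match excluded_middle_informative (exists k, forall l, l <> k -> phi (fst (sg k l)) = snd (sg k l)) with
  | left H => Some (proj1_sig (constructive_indefinite_description _ H))
  | right _ => None end.

Lemma idx_spec I L (sg : I -> I -> L * bool) phi k0 :
  (forall k, (forall l, l <> k -> phi (fst (sg k l)) = snd (sg k l)) <-> k = k0) ->
  idx sg phi = Some k0.
Proof. move=> H; rewrite /idx; case: excluded_middle_informative => [Hex|Hn].
  case: constructive_indefinite_description => k /= /H -> //.
exfalso; apply: Hn; exists k0; exact: (proj2 (H k0) erefl).
Qed.

Lemma big_case (K : Type) (ltK : K -> K -> Prop) (M L X T : Type) (p : K -> K -> M) (c : K -> K -> T)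
  (HwoK : strict_wellorder ltK)
  (Hreg : forall P : K -> Prop, card_lt {x | P x} K -> exists y, forall x, P x -> ltK x y)
  (k0 : K) (Z : Type) (HZ : is_pow_lt L X Z) (HZK : card_lt Z K) (HZT : card_le Z T)
  (h : K -> L -> bool) (Hh : forall x y, h x = h y -> x = y)
  (HT : card_le T K) (HTT : is_pow_lt T X T)
  (RL : L -> L -> Prop) (HRL : strict_wellorder RL) (Linf : ~ finite L)
  (Hbool : card_lt bool X)
  (Hc : @pr1_witness K ltK M T X p c) : @pr0 K ltK M T X p.
Proof.
have Hunit : card_lt unit X.
  apply: (le_lt_trans _ Hbool); exists (fun _ => true) => [[] []] //.
have HTpow : forall N, card_lt N X -> card_le (N -> T) T := proj1 HTT.
have HTT2 : card_le (T * T) T.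
  apply: (le_trans _ (HTpow _ Hbool)).
  exists (fun q b => if b then q.1 else q.2) => [[a b] [a' b']] E.
  have E1 := f_equal (fun f => f true) E; have E2 := f_equal (fun f => f false) E.
  simpl in E1, E2; by subst.
have HLL : card_le (L * L) L := hess HRL Linf.
have [eN HeN] := inf_nat Linf.
have l0 : L := eN 0.
have HboolL : card_le bool L.
  exists (fun b : bool => eN (if b then 0 else 1)) => [[] []] // /HeN //.
have HLb : card_le (L * bool) L := le_trans (le_prod (le_refl L) HboolL) HLL.
have HLZ : card_le L Z.
  apply: (le_trans _ (proj1 HZ _ Hunit)); exists (fun l (_ : unit) => l) => a b E.
  exact: (f_equal (fun f => f tt) E).
have HLT : card_le L T := le_trans HLZ HZT.
have HboolT : card_le bool T := le_trans HboolL HLT.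
have [eT HeT] := HT.
pose RT := fun a b => ltK (eT a) (eT b).
have HRT : strict_wellorder RT := wo_pull HwoK HeT.
pose Data := fun t : T => ((seg RT t -> seg RT t -> L * bool) * (seg RT t -> seg RT t -> T))%type.
have HData : forall t, card_lt (seg RT t) X -> card_le (Data t) T.
  move=> t Ht; rewrite /Data.
  apply: (le_trans (le_prod (le_cod _ (le_cod _ (le_trans HLb HLT))) (le_refl _))).
  apply: (le_trans (le_pairfun _ _ _)).
  apply: (le_trans (le_cod _ (le_pairfun _ _ _))).
  apply: (le_trans (le_cod _ (le_cod _ HTT2))).
  apply: (le_trans (le_cod _ (HTpow _ Ht))); exact: HTpow.
pose Q := {t : T | card_lt (seg RT t) X}.
pose Code := {q : Q & Data (proj1_sig q)}.
pose iq := fun q : Q => proj1_sig (constructive_indefinite_description _ (HData _ (proj2_sig q))).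
have Hiq : forall q x y, iq q x = iq q y -> x = y.
  move=> q; rewrite /iq; case: constructive_indefinite_description => f Hf //.
have [j2 Hj2] := HTT2.
pose enc := fun cd : Code => j2 (proj1_sig (projT1 cd), iq (projT1 cd) (projT2 cd)).
have Henc : forall x y, enc x = enc y -> x = y.
  move=> [q x] [q' y] /Hj2 [] E; have Eq : q = q'.
    by apply: (eq_sig_hprop (fun _ => proof_irrelevance _)).
  subst q' => /Hiq -> //.
pose dec := fun t : T => match excluded_middle_informative (exists cd, enc cd = t) with
  | left H => Some (proj1_sig (constructive_indefinite_description _ H)) | right _ => None end.
have Hdec : forall cd, dec (enc cd) = Some cd.
  move=> cd; rewrite /dec; case: excluded_middle_informative => [H|Hn].
    case: constructive_indefinite_description => cd' /= /Henc -> //.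
  exfalso; apply: Hn; by exists cd.
pose d := fun a b => match dec (c a b) with
  | Some (existT q (sg, fv)) => match idx sg (h a), idx sg (h b) with
        | Some k1, Some k2 => fv k1 k2 | _, _ => c k0 k0 end
  | None => c k0 k0 end.
exists d => S RS HRS HSX F HF tau.
have [Hinc [Hd1 Hd2]] := HF.
have [HtK [HtotK HwfK]] := HwoK.
have Finj : forall a i j, F a i = F a j -> i = j.
  move=> a i j E; case: HRS => _ [Htot _]; case: (Htot i j) => [H|[//|H]]; have := Hinc a _ _ H;
  rewrite E => H'; exfalso; exact: (wo_irrefl HwfK H').
pose sig := fun a i j => let l := epsilon (inhabits l0) (fun l => i <> j -> h (F a i) l <> h (F a j) l) in
   (l, h (F a i) l).
have Hsig : forall a i j, i <> j -> h (F a i) (fst (sig a i j)) <> h (F a j) (fst (sig a i j)).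
  move=> a i j Hij; rewrite /sig /=.
  apply: (epsilon_spec (inhabits l0) (fun l => i <> j -> h (F a i) l <> h (F a j) l)) => //.
  apply: NNPP => Hn; apply: Hij; apply: (Finj a); apply: Hh; apply: functional_extensionality => l.
  apply: NNPP => Hl; apply: Hn; by exists l.
have Hsigb : card_lt (S -> S -> L * bool) K.
  apply: (le_lt_trans _ HZK).
  apply: (le_trans (le_cod _ (le_cod _ HLb))).
  case: (classic (finite S)) => HSf.
    have HfL := finpow' l0 HLL HSf.
    exact: (le_trans (le_cod _ HfL) (le_trans HfL HLZ)).
  have HSS := hess HRS HSf.
  exact: (le_trans (le_curry _ _ _) (le_trans (le_dom l0 HSS) (proj1 HZ _ HSX))).
have [sg0 [e He]] := pigeon sig HwoK Hreg Hsigb.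
pose e' := fun a => proj1_sig (e a).
have He' : forall a, sig (e' a) = sg0 := fun a => proj2_sig (e a).
have He'inj : forall a b, e' a = e' b -> a = b.
  move=> a b E; apply: He; exact: (eq_sig_hprop (fun _ => proof_irrelevance _)).
pose F' := fun a => F (e' a).
have HF' : disjoint_family ltK RS F'.
  split; [|split].
  - move=> a i j; exact: Hinc.
  - move=> a b Hab; apply: Hd1 => /He'inj //.
  - move=> a b Hab; apply: Hd2 => /He'inj //.
have HST : card_lt S T.
  split.
    apply: (le_trans (le_fun_bool S)); apply: (le_trans (le_cod _ HboolT)); exact: HTpow.
  move=> HTS; apply: (@cantor S); apply: (le_trans _ HTS).
  apply: (le_trans (le_cod _ HboolT)); exact: HTpow.
have [f [Hmono Hdown]] : exists f : S -> T, (forall v w, RS v w -> RT (f v) (f w)) /\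
    (forall w b, RT b (f w) -> exists v, RS v w /\ f v = b).
  apply: embed => // s Hle; case: HST => _; apply.
  apply: (le_trans Hle); exists (@proj1_sig _ _); exact: (eq_sig_hprop (fun _ => proof_irrelevance _)).
have finj := embed_inj HRS HRT Hmono.
have [t0 [Ht0 Hmin]] : exists t0, (~ exists s, f s = t0) /\ forall y, RT y t0 -> ~ ~ exists s, f s = y.
  apply: (wo_min (P := fun t => ~ exists s, f s = t) (proj2 (proj2 HRT))).
  apply: NNPP => Hn; case: HST => _; apply.
  have Hall : forall t, exists s, f s = t by move=> t; apply: NNPP => H; apply: Hn; by exists t.
  exists (fun t => proj1_sig (constructive_indefinite_description _ (Hall t))) => a b.
  case: constructive_indefinite_description => s1 /= <-.
  case: constructive_indefinite_description => s2 /= <- -> //.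
have Hbelow : forall s, RT (f s) t0.
  move=> s; case: (proj1 (proj2 HRT) (f s) t0) => [//|[E|H]]; exfalso; apply: Ht0.
    by exists s.
  have [v [_ Ev]] := Hdown _ _ H; by exists v.
have Hsurj : forall t, RT t t0 -> exists s, f s = t.
  move=> t Ht; apply: NNPP; exact: (Hmin t Ht).
pose io := fun s => exist (fun t => RT t t0) (f s) (Hbelow s).
pose ioinv := fun k : seg RT t0 => proj1_sig (constructive_indefinite_description _ (Hsurj (proj1_sig k) (proj2_sig k))).
have Hioinv : forall k, io (ioinv k) = k.
  move=> k; apply: (eq_sig_hprop (fun _ => proof_irrelevance _)); rewrite /io /ioinv /=.
  case: constructive_indefinite_description => s //.
have Hinvio : forall s, ioinv (io s) = s.
  move=> s; apply: finj; rewrite /ioinv /=.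
  case: constructive_indefinite_description => s' //.
have Hseg : card_lt (seg RT t0) X.
  apply: (le_lt_trans _ HSX); exists ioinv => a b E.
  by rewrite -(Hioinv a) -(Hioinv b) E.
pose q0 := exist (fun t => card_lt (seg RT t) X) t0 Hseg : Q.
pose sg' := fun k l : seg RT t0 => sg0 (ioinv k) (ioinv l).
pose fv := fun m (k l : seg RT t0) => tau (ioinv k) (ioinv l) m.
pose code := fun m => existT (fun q : Q => Data (proj1_sig q)) q0 (sg', fv m) : Code.
have [x [y [Hord Hval]]] := Hc S RS HRS HSX F' HF' (fun m => enc (code m)).
have Hkey : forall a i, idx sg' (h (F (e' a) i)) = Some (io i).
  move=> a i; apply: idx_spec => k; split; last first.
    move=> -> l _; rewrite /sg' -(He' a) Hinvio //.
  move=> Hk; apply: NNPP => Hne.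
  have Hl : io i <> k by move=> E; apply: Hne; rewrite E.
  have H1 := Hk _ Hl.
  have Hji : ioinv k <> i by move=> E; apply: Hne; by rewrite -E Hioinv.
  apply: (Hsig (e' a) _ _ Hji).
  rewrite /sg' Hinvio -(He' a) in H1.
  exact: (esym H1).
exists (e' x), (e' y); split; first exact: Hord.
move=> i j; rewrite /d.
have -> : c (F (e' x) i) (F (e' y) j) = enc (code (p (F (e' x) i) (F (e' y) j))) := Hval i j.
rewrite Hdec /code /= Hkey Hkey /fv !Hinvio //.
Qed.

Theorem theoremB (K : Type) (ltK : K -> K -> Prop) (M L X T : Type) :
  regular_uncountable ltK ->
  card_le M K -> card_le L K -> card_le X K -> card_le T K ->
  (* lambda^{<chi} < kappa and lambda^{<chi} <= theta (= theta^{<chi}) *)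
  (exists Z : Type, is_pow_lt L X Z /\ card_lt Z K /\ card_le Z T) ->
  (* kappa <= 2^lambda *)
  card_le K (L -> bool) ->
  (* theta^{<chi} = theta *)
  is_pow_lt T X T ->
  forall p : K -> K -> M, @pr1 K ltK M T X p <-> @pr0 K ltK M T X p.
Proof.
move=> HK HM HL HX HT [Z [HZ [HZK HZT]]] HKL HTT p.
case: HK => [[HwoK Hinit] [HnatK Hreg]].
have [fN HfN] := proj1 HnatK.
pose k0 := fN 0.
have [h Hh] := HKL.
have Linf : ~ finite L.
  move=> HLf; apply: nat_not_fin; apply: (fin_le (proj1 HnatK)).
  apply: (fin_le HKL); exact: (fin_fun_bool HLf).
have [eL HeL] := HL.
have HRL := wo_pull HwoK HeL.
split.
- move=> [c Hc].
  case: (classic (exists S0 : Type, card_lt S0 X /\ exists i j : S0, i <> j)) => [[S0 [HS0 [i0 [j0 Hij]]]]|Hsmall].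
  + have Hbool : card_lt bool X.
      apply: (le_lt_trans _ HS0); exists (fun b : bool => if b then i0 else j0).
      by move=> [] [] // E; exfalso; apply: Hij; rewrite E.
    exact: (big_case HwoK Hreg k0 HZ HZK HZT Hh HT HTT HRL Linf Hbool Hc).
  + exists c => S RS HRS HSX F HF tau.
    have HS : forall i j : S, i = j.
      move=> i j; apply: NNPP => Hij; apply: Hsmall; exists S; split => //; by exists i, j.
    case: (classic (inhabited S)) => [[i0]|HnS].
    * have [x [y [H1 H2]]] := Hc S RS HRS HSX F HF (tau i0 i0).
      exists x, y; split => // i j; rewrite (HS i i0) (HS j i0); exact: H2.
    * exists k0, k0; split => i; exfalso; exact: HnS (inhabits i).
- move=> [c Hc]; exists c => S RS HRS HSX F HF tau.
  have [x [y [H1 H2]]] := Hc S RS HRS HSX F HF (fun _ _ => tau).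
  by exists x, y; split.
Qed.
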